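(* Let $|q|<1$, let $n\ge 0$ be an integer, and let $t$ be a complex number with $|t|<1$ and $|xt|<1$. Then $$\mathbb{E}(D_{xy})\left\{\frac{(yt;q)_\infty}{(xt;q)_\infty}\,\frac{P_n(x,y)}{(yt;q)_n}\right\}=\frac{(yt;q)_\infty}{(t,xt;q)_\infty}\sum_{k=0}^n {n\brack k}\frac{(y,xt;q)_k}{(yt;q)_k}\,x^{n-k}.$$
   Context: Throughout $|q|<1$. $(a;q)_n=\prod_{k=0}^{n-1}(1-aq^k)$, $(a;q)_\infty=\prod_{k\ge0}(1-aq^k)$, $(a_1,\dots,a_m;q)_n=\prod_i(a_i;q)_n$ (also for $n=\infty$), and ${n\brack k}=\frac{(q;q)_n}{(q;q)_k(q;q)_{n-k}}$. $P_n(x,y)=(x-y)(x-qy)\cdots(x-q^{n-1}y)$ with $P_0=1$. The homogeneous $q$-difference operator acting on functions of $(x,y)$ is $D_{xy}f(x,y)=\frac{f(x,q^{-1}y)-f(qx,y)}{x-q^{-1}y}$, and the homogeneous $q$-shift operator is $\mathbb{E}(D_{xy})=\sum_{k=0}^\infty\frac{D_{xy}^k}{(q;q)_k}$. *)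

(* Defs.v *)
From Stdlib Require Import Reals.
From Coquelicot Require Import Coquelicot.
Open Scope C_scope.

Fixpoint qpoch (a q : C) (n : nat) : C :=
  match n with
  | O => 1
  | S m => qpoch a q m * (1 - a * pow_n q m)
  end.

(* infinite q-shifted factorial (a;q)_oo, the limit of (a;q)_n as n -> oo,
   taken componentwise (real and imaginary parts); for |q| < 1 the limit exists *)
Definition qpinf (a q : C) : C :=
  (real (Lim_seq (fun n => Re (qpoch a q n))),
   real (Lim_seq (fun n => Im (qpoch a q n)))).

Definition qbinom (q : C) (n k : nat) : C :=
  qpoch q q n / (qpoch q q k * qpoch q q (n - k)).

Fixpoint Pn (q x y : C) (n : nat) : C :=
  match n with
  | O => 1
  | S m => Pn q x y m * (x - pow_n q m * y)
  end.

Definition Dxy (q : C) (f : C -> C -> C) : C -> C -> C :=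
  fun x y => (f x (/ q * y) - f (q * x) y) / (x - / q * y).

Definition Dxy_pow (q : C) (k : nat) (f : C -> C -> C) : C -> C -> C :=
  Nat.iter k (Dxy q) f.

(* Main.v *)
Require Import Defs.
From Stdlib Require Import Reals Lra Lia Classical ClassicalEpsilon.
From Coquelicot Require Import Coquelicot.
Open Scope C_scope.

Lemma pS (q : C) m : (pow_n q (S m) : C) = q * pow_n q m. Proof. reflexivity. Qed.
Lemma pO (q : C) : (pow_n q 0 : C) = 1. Proof. reflexivity. Qed.

Lemma Cmod_pow_n (q:C) m : Cmod (pow_n q m) = (Cmod q ^ m)%R.
Proof. induction m. rewrite pO. apply Cmod_1. rewrite pS, Cmod_mult, IHm. reflexivity. Qed.

Lemma pow_n_add (q:C) a b : (pow_n q (a + b) : C) = pow_n q a * pow_n q b.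
Proof. induction a. rewrite pO, Cmult_1_l. reflexivity. change (S a + b)%nat with (S (a + b)). rewrite !pS, IHa. ring. Qed.

Lemma pow_n_ne0 (q:C) m : q <> 0 -> (pow_n q m : C) <> 0.
Proof. intros hq. apply Cmod_gt_0. rewrite Cmod_pow_n. apply pow_lt. now apply Cmod_gt_0. Qed.

Lemma Rpow_le1 (r:R) m : (0 <= r <= 1)%R -> (0 <= r ^ m <= 1)%R.
Proof. intros h. induction m; simpl. lra. nra. Qed.

Lemma Cmod_pow_le (q:C) m : (Cmod q < 1)%R -> (Cmod (pow_n q m) <= 1)%R.
Proof. intros h. rewrite Cmod_pow_n. apply Rpow_le1. split. apply Cmod_ge_0. lra. Qed.

Lemma Cmod_mul_pow_lt (a q:C) m : (Cmod q < 1)%R -> (Cmod a < 1)%R -> (Cmod (a * pow_n q m) < 1)%R.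
Proof. intros h1 h2. rewrite Cmod_mult. pose proof (Cmod_pow_le q m h1). pose proof (Cmod_ge_0 a).
 pose proof (Cmod_ge_0 (pow_n q m)). nra. Qed.

Lemma one_minus_ne0 (w:C) : (Cmod w < 1)%R -> 1 - w <> 0.
Proof. intros h e. assert (w = 1). { replace w with (1 - (1 - w)) by ring. rewrite e. ring. }
 subst. rewrite Cmod_1 in h. lra. Qed.

Lemma qpoch_S a q m : qpoch a q (S m) = qpoch a q m * (1 - a * pow_n q m).
Proof. reflexivity. Qed.
Lemma qpoch_O a q : qpoch a q 0 = 1. Proof. reflexivity. Qed.

Lemma qpoch_front a q m : qpoch a q (S m) = (1 - a) * qpoch (a*q) q m.
Proof. revert a. induction m; intros a.
 - rewrite qpoch_S, !qpoch_O, pO. ring.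
 - rewrite qpoch_S, IHm, qpoch_S, pS. ring. Qed.

Lemma qpoch_ne0_lt a q m : (Cmod q < 1)%R -> (Cmod a < 1)%R -> qpoch a q m <> 0.
Proof. intros h1 h2. induction m. rewrite qpoch_O. intro e; injection e; lra.
 rewrite qpoch_S. apply Cmult_neq_0. auto. apply one_minus_ne0, Cmod_mul_pow_lt; auto. Qed.

Lemma qpoch_ne0_le a q n k : qpoch a q n <> 0 -> (k <= n)%nat -> qpoch a q k <> 0.
Proof. intros h hk. induction hk. auto. apply IHhk. rewrite qpoch_S in h. intro e. apply h. rewrite e. ring. Qed.

Lemma qpochq_ne0 q k : (Cmod q < 1)%R -> qpoch q q k <> 0.
Proof. intros h. apply qpoch_ne0_lt; auto. Qed.

Definition csum (a : nat -> C) (n : nat) : C := sum_n a n.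
Lemma sumS (a : nat -> C) n : csum a (S n) = csum a n + a (S n).
Proof. exact (sum_Sn a n). Qed.
Lemma sum0 (a : nat -> C) : csum a 0 = a 0%nat.
Proof. exact (sum_O a). Qed.
Lemma sumL (a : nat -> C) n : csum a (S n) = a 0%nat + csum (fun k => a (S k)) n.
Proof. induction n. rewrite sumS, !sum0. reflexivity. rewrite sumS, IHn, sumS. ring. Qed.
Lemma sum_ext_le (a b : nat -> C) n : (forall k, (k <= n)%nat -> a k = b k) -> csum a n = csum b n.
Proof. intros h. induction n. rewrite !sum0; apply h; lia. rewrite !sumS, IHn, h; auto. Qed.
Lemma sum_plus (a b : nat -> C) n : csum (fun k => a k + b k) n = csum a n + csum b n.
Proof. induction n. rewrite !sum0; auto. rewrite !sumS, IHn. ring. Qed.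
Lemma sum_scal (c : C) (a : nat -> C) n : csum (fun k => c * a k) n = c * csum a n.
Proof. induction n. rewrite !sum0; auto. rewrite !sumS, IHn. ring. Qed.
Lemma sum_minus (a b : nat -> C) n : csum (fun k => a k - b k) n = csum a n - csum b n.
Proof. induction n. rewrite !sum0; auto. rewrite !sumS, IHn. ring. Qed.

Lemma Pn_S q u v m : Pn q u v (S m) = Pn q u v m * (u - pow_n q m * v).
Proof. reflexivity. Qed.
Lemma Pn_O q u v : Pn q u v 0 = 1. Proof. reflexivity. Qed.
Lemma Pn_front q u v m : Pn q u v (S m) = (u - v) * Pn q u (q * v) m.
Proof. revert v. induction m; intros v. rewrite Pn_S, !Pn_O, pO. ring.
 rewrite Pn_S, IHm, Pn_S, pS. ring. Qed.
Lemma Pn_hom q c u v m : Pn q (c * u) (c * v) m = pow_n c m * Pn q u v m.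
Proof. induction m. rewrite !Pn_O, pO. ring. rewrite !Pn_S, IHm, pS. ring. Qed.

Lemma pow_n_mul (a b : C) m : (pow_n (a * b) m : C) = pow_n a m * pow_n b m.
Proof. induction m. rewrite !pO. ring. rewrite !pS, IHm. ring. Qed.

Lemma qbinom_0 q n : (Cmod q < 1)%R -> qbinom q n 0 = 1.
Proof. intros h. unfold qbinom. rewrite Nat.sub_0_r, qpoch_O. field. apply qpochq_ne0; auto. Qed.
Lemma qbinom_nn q n : (Cmod q < 1)%R -> qbinom q n n = 1.
Proof. intros h. unfold qbinom. rewrite Nat.sub_diag, qpoch_O. field. apply qpochq_ne0; auto. Qed.

Lemma qbinom_pascal q n k : (Cmod q < 1)%R -> (k < n)%nat ->
  qbinom q (S n) (S k) = qbinom q n k + pow_n q (S k) * qbinom q n (S k).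
Proof. intros h hk. assert (exists j, n = S (k + j))%nat as [j hj] by (exists (n - S k)%nat; lia).
 unfold qbinom.
 replace (S n - S k)%nat with (S j) by lia.
 replace (n - k)%nat with (S j) by lia.
 replace (n - S k)%nat with j by lia.
 rewrite (qpoch_S q q n), (qpoch_S q q k), (qpoch_S q q j).
 assert (hn : (pow_n q n : C) = q * pow_n q k * pow_n q j) by (rewrite hj, pS, pow_n_add; ring).
 rewrite hn, pS.
 pose proof (qpochq_ne0 q k h). pose proof (qpochq_ne0 q j h).
 pose proof (qpochq_ne0 q n h).
 assert (1 - q * pow_n q k <> 0) by (apply one_minus_ne0; rewrite <- pS; rewrite Cmod_pow_n; apply pow_lt_1_compat; [split; [apply Cmod_ge_0|auto]|lia]).
 assert (1 - q * pow_n q j <> 0) by (apply one_minus_ne0; rewrite <- pS; rewrite Cmod_pow_n; apply pow_lt_1_compat; [split; [apply Cmod_ge_0|auto]|lia]).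
 field. repeat split; auto.
Qed.

Definition qbz q n k : C := if Nat.leb k n then qbinom q n k else 0.

Lemma qbz_le q n k : (k <= n)%nat -> qbz q n k = qbinom q n k.
Proof. intros H; unfold qbz; rewrite (proj2 (Nat.leb_le _ _) H); auto. Qed.
Lemma qbz_gt q n k : (n < k)%nat -> qbz q n k = 0.
Proof. intros H; unfold qbz; rewrite (proj2 (Nat.leb_gt _ _) H); auto. Qed.

Lemma qbz_pascal q n k : (Cmod q < 1)%R -> qbz q (S n) (S k) = qbz q n k + pow_n q (S k) * qbz q n (S k).
Proof. intros h. destruct (Compare_dec.lt_eq_lt_dec k n) as [[hk|hk]|hk].
 - rewrite !qbz_le by lia. apply qbinom_pascal; auto.
 - subst. rewrite (qbz_gt q n (S n)) by lia. rewrite !qbz_le by lia. rewrite !qbinom_nn by auto. ring.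
 - rewrite !qbz_gt by lia. ring. Qed.

Lemma pascal_sum q n (A : nat -> C) : (Cmod q < 1)%R ->
  csum (fun k => qbz q (S n) k * A k) (S n) = csum (fun k => qbz q n k * (A (S k) + pow_n q k * A k)) n.
Proof. intros h. rewrite sumL.
 rewrite (sum_ext_le _ (fun k => qbz q n k * A (S k) + pow_n q (S k) * qbz q n (S k) * A (S k))).
 2:{ intros k _. rewrite qbz_pascal by auto. ring. }
 rewrite sum_plus.
 rewrite (sum_ext_le (fun k => qbz q n k * (A (S k) + pow_n q k * A k)) (fun k => qbz q n k * A (S k) + pow_n q k * qbz q n k * A k)).
 2:{ intros k _. ring. }
 rewrite sum_plus.
 set (f := fun k => pow_n q k * qbz q n k * A k).
 assert (E: csum f (S n) = f 0%nat + csum (fun k => pow_n q (S k) * qbz q n (S k) * A (S k)) n) by (exact (sumL f n)).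
 rewrite sumS in E.
 assert (E2 : csum (fun k => pow_n q (S k) * qbz q n (S k) * A (S k)) n = csum f n + f (S n) - f 0%nat).
 { rewrite E. ring. }
 rewrite E2.
 assert (f (S n) = 0) by (unfold f; rewrite qbz_gt by lia; ring).
 assert (f 0%nat = A 0%nat) by (unfold f; rewrite qbz_le, qbinom_0, pO by (auto; lia); ring).
 assert (qbz q (S n) 0 = 1) by (rewrite qbz_le, qbinom_0 by (auto; lia); auto).
 rewrite H, H0, H1. unfold f. ring.
Qed.

Lemma csum_qbz_qbinom q n (A : nat -> C) : csum (fun k => qbz q n k * A k) n = csum (fun k => qbinom q n k * A k) n.
Proof. apply sum_ext_le. intros k hk. rewrite qbz_le; auto. Qed.

Lemma qpoch_Sn_ne0_k a q n k : qpoch a q (S n) <> 0 -> (k <= n)%nat -> qpoch a q k <> 0 /\ 1 - a * pow_n q k <> 0.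
Proof. intros h hk. assert (qpoch a q (S k) <> 0) by (apply (qpoch_ne0_le a q (S n)); auto; lia).
 rewrite qpoch_S in H. split; intro e; apply H; rewrite e; ring. Qed.

Lemma qpoch_shift_rel a q k : (1 - a) * qpoch (a * q) q k = qpoch a q k * (1 - a * pow_n q k).
Proof. rewrite <- qpoch_front, qpoch_S. reflexivity. Qed.

Definition Sfun q x y t n := csum (fun k => qbinom q n k * (qpoch y q k * qpoch (x*t) q k) / qpoch (y*t) q k * pow_n x (n - k)) n.

Lemma e_identity q x y t n : (Cmod q < 1)%R -> 1 - x * t <> 0 -> qpoch (y*t) q (S n) <> 0 ->
  t * Sfun q x y t (S n) = Sfun q x y t n - (1 - t) * (1 - x * t) / (1 - y * t) * Sfun q x y (t * q) n.
Proof. intros hq hx hy.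
 assert (hy1 : 1 - y * t <> 0). { destruct (qpoch_Sn_ne0_k _ _ _ 0 hy) as [_ H]; [lia|]. rewrite pO in H. intro e; apply H. rewrite <- e. ring. }
 unfold Sfun.
 set (A := fun k => (qpoch y q k * qpoch (x*t) q k) / qpoch (y*t) q k * pow_n x (S n - k)).
 rewrite (sum_ext_le _ (fun k => qbz q (S n) k * A k)).
 2:{ intros k hk. rewrite qbz_le by auto. unfold A. unfold Cdiv. ring. }
 rewrite pascal_sum by auto. rewrite csum_qbz_qbinom.
 rewrite <- sum_scal, <- sum_scal, <- sum_minus.
 apply sum_ext_le. intros k hk. unfold A.
 replace (S n - S k)%nat with (n - k)%nat by lia.
 replace (S n - k)%nat with (S (n - k)) by lia.
 destruct (qpoch_Sn_ne0_k _ _ _ k hy hk) as [hY hY1].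
 pose proof (qpoch_shift_rel (x*t) q k) as RX.
 pose proof (qpoch_shift_rel (y*t) q k) as RY.
 replace (x * t * q) with (x * (t * q)) in RX by ring.
 replace (y * t * q) with (y * (t * q)) in RY by ring.
 assert (EX : qpoch (x * (t * q)) q k = qpoch (x*t) q k * (1 - x * t * pow_n q k) / (1 - x * t)).
 { rewrite <- RX. field. auto. }
 assert (EY : qpoch (y * (t * q)) q k = qpoch (y*t) q k * (1 - y * t * pow_n q k) / (1 - y * t)).
 { rewrite <- RY. field. auto. }
 rewrite EX, EY, !qpoch_S, pS.
 field. repeat split; auto.
Qed.

Definition Ufun q y n x := csum (fun k => qbinom q n k * Pn q x y (n - k)) n.
Definition Vfun q y n x := csum (fun k => qbinom q n k * qpoch y q k * pow_n x (n - k)) n.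

Lemma pow_n_split (q : C) n k : (k <= n)%nat -> (pow_n q k * pow_n q (n - k) : C) = pow_n q n.
Proof. intros hk. rewrite <- pow_n_add. f_equal. lia. Qed.

Lemma recU q y n x : (Cmod q < 1)%R -> q <> 0 ->
  Ufun q y (S n) x = Ufun q y n x + (x - y) * pow_n q n * Ufun q y n (x / q).
Proof. intros hq hq0. unfold Ufun.
 rewrite (sum_ext_le _ (fun k => qbz q (S n) k * Pn q x y (S n - k))).
 2:{ intros k hk. rewrite qbz_le by auto. auto. }
 rewrite pascal_sum by auto. rewrite csum_qbz_qbinom.
 rewrite <- sum_scal, <- sum_plus.
 apply sum_ext_le. intros k hk.
 replace (S n - S k)%nat with (n - k)%nat by lia.
 replace (S n - k)%nat with (S (n - k)) by lia.
 rewrite Pn_front.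
 assert (E : Pn q x (q * y) (n - k) = pow_n q (n - k) * Pn q (x / q) y (n - k)).
 { rewrite <- Pn_hom. f_equal. field. auto. }
 rewrite E, <- (pow_n_split q n k hk). ring.
Qed.

Lemma recV q y n x : (Cmod q < 1)%R -> q <> 0 ->
  Vfun q y (S n) x = Vfun q y n x + (x - y) * pow_n q n * Vfun q y n (x / q).
Proof. intros hq hq0. unfold Vfun.
 rewrite (sum_ext_le _ (fun k => qbz q (S n) k * (qpoch y q k * pow_n x (S n - k)))).
 2:{ intros k hk. rewrite qbz_le by auto. ring. }
 rewrite pascal_sum by auto. rewrite csum_qbz_qbinom.
 rewrite <- sum_scal, <- sum_plus.
 apply sum_ext_le. intros k hk.
 replace (S n - S k)%nat with (n - k)%nat by lia.
 replace (S n - k)%nat with (S (n - k)) by lia.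
 assert (E : (pow_n x (n - k) : C) = pow_n (x / q) (n - k) * pow_n q (n - k)).
 { rewrite <- pow_n_mul. assert (Hx : x / q * q = x) by (field; auto). rewrite Hx. reflexivity. }
 rewrite qpoch_S, pS, E, <- (pow_n_split q n k hk). ring.
Qed.

Lemma U_eq_V q y n x : (Cmod q < 1)%R -> q <> 0 -> Ufun q y n x = Vfun q y n x.
Proof. intros hq hq0. revert x. induction n; intros x.
 - unfold Ufun, Vfun. rewrite !sum0. simpl (0 - 0)%nat. rewrite Pn_O, qpoch_O, pO. ring.
 - rewrite recU, recV, !IHn by auto. reflexivity.
Qed.

Definition Clim (u : nat -> C) (L : C) := filterlim (u : nat -> C_NormedModule) eventually (locally (L : C_NormedModule)).

Lemma Clim_Cmod (u : nat -> C) L (e : nat -> R) :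
  (forall n, (Cmod (u n - L) <= e n)%R) -> is_lim_seq e 0%R -> Clim u L.
Proof. intros he hl. unfold Clim. apply (proj2 (filterlim_locally_ball_norm _ _)).
 intros eps. apply is_lim_seq_spec in hl. specialize (hl eps). simpl in hl.
 destruct hl as [N hN]. exists N. intros n hn. specialize (hN n hn).
 unfold ball_norm. change (Cmod (u n - L) < eps)%R.
 specialize (he n). rewrite Rminus_0_r in hN. apply Rle_lt_trans with (1 := he).
 apply Rle_lt_trans with (2 := hN). apply Rle_abs. Qed.

Lemma Clim_to_Cmod (u : nat -> C) L : Clim u L -> is_lim_seq (fun n => Cmod (u n - L)) 0%R.
Proof. intros h. apply is_lim_seq_spec. intros eps.
 apply (proj1 (filterlim_locally_ball_norm _ _)) with (eps := eps) in h.
 destruct h as [N hN]. exists N. intros n hn. specialize (hN n hn).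
 unfold ball_norm in hN. change (Cmod (u n - L) < eps)%R in hN.
 rewrite Rminus_0_r, Rabs_pos_eq by apply Cmod_ge_0. auto. Qed.

Lemma Clim_unique (u : nat -> C) L1 L2 : Clim u L1 -> Clim u L2 -> L1 = L2.
Proof. intros h1 h2. apply Clim_to_Cmod in h1, h2.
 assert (H : Rbar_le (Cmod (L1 - L2)) (0 + 0)%R).
 { apply (is_lim_seq_le (fun _ => Cmod (L1 - L2)) (fun n => Cmod (u n - L1) + Cmod (u n - L2))%R).
   - intros n. replace (L1 - L2) with ((u n - L2) + - (u n - L1)) by ring.
     eapply Rle_trans. apply Cmod_triangle. rewrite Cmod_opp. lra.
   - apply is_lim_seq_const.
   - apply is_lim_seq_plus'; auto. }
 simpl in H. assert (Cmod (L1 - L2) = 0%R) by (pose proof (Cmod_ge_0 (L1 - L2)); lra).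
 apply Cmod_eq_0 in H0. replace L1 with ((L1 - L2) + L2) by ring. rewrite H0. ring. Qed.

Lemma Clim_scal (u : nat -> C) L c : Clim u L -> Clim (fun n => c * u n) (c * L).
Proof. intros h. apply Clim_to_Cmod in h.
 apply Clim_Cmod with (e := fun n => (Cmod c * Cmod (u n - L))%R).
 - intros n. rewrite <- Cmod_mult. right. f_equal. ring.
 - replace 0%R with (Cmod c * 0)%R by ring. apply (is_lim_seq_scal_l _ (Cmod c) 0%R h). Qed.

Lemma Clim_incr (u : nat -> C) L : Clim (fun n => u (S n)) L -> Clim u L.
Proof. intros h. apply Clim_to_Cmod in h.
 apply Clim_Cmod with (e := fun n => Cmod (u n - L)). intros; lra.
 apply is_lim_seq_incr_1. auto. Qed.

Lemma Clim_ext (u v : nat -> C) L : (forall n, u n = v n) -> Clim u L -> Clim v L.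
Proof. intros e h. apply Clim_to_Cmod in h.
 apply Clim_Cmod with (e := fun n => Cmod (u n - L)). intros; rewrite e; lra. auto. Qed.

Lemma Clim_const L : Clim (fun _ => L) L.
Proof. apply Clim_Cmod with (e := fun _ => 0%R). intros n. replace (L - L) with (RtoC 0) by ring.
 rewrite Cmod_0. lra. apply is_lim_seq_const. Qed.

Lemma im_le_Cmod (c : C) : (Rabs (Im c) <= Cmod c)%R.
Proof. pose proof (Rmax_Cmod c). destruct c. simpl in *. pose proof (Rmax_r (Rabs r) (Rabs r0)). lra. Qed.
Lemma re_le_Cmod' (c : C) : (Rabs (Re c) <= Cmod c)%R.
Proof. apply re_le_Cmod. Qed.

Lemma Re_minus (a b : C) : Re (a - b) = (Re a - Re b)%R.
Proof. destruct a, b. unfold Cminus, Cplus, Copp. simpl. ring. Qed.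
Lemma Im_minus (a b : C) : Im (a - b) = (Im a - Im b)%R.
Proof. destruct a, b. unfold Cminus, Cplus, Copp. simpl. ring. Qed.

Lemma Clim_qpinf a q L : Clim (qpoch a q) L -> qpinf a q = L.
Proof. intros h. apply Clim_to_Cmod in h.
 assert (HR : is_lim_seq (fun n => Re (qpoch a q n)) (Re L)).
 { apply is_lim_seq_le_le with (u := fun n => (Re L - Cmod (qpoch a q n - L))%R)
     (w := fun n => (Re L + Cmod (qpoch a q n - L))%R).
   - intros n. pose proof (re_le_Cmod (qpoch a q n - L)).
     rewrite Re_minus in H.
     apply Rabs_le_between in H. lra.
   - replace (Finite (Re L)) with (Finite (Re L - 0)) by (f_equal; ring).
     apply is_lim_seq_minus'. apply is_lim_seq_const. auto.
   - replace (Finite (Re L)) with (Finite (Re L + 0)) by (f_equal; ring).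
     apply is_lim_seq_plus'. apply is_lim_seq_const. auto. }
 assert (HI : is_lim_seq (fun n => Im (qpoch a q n)) (Im L)).
 { apply is_lim_seq_le_le with (u := fun n => (Im L - Cmod (qpoch a q n - L))%R)
     (w := fun n => (Im L + Cmod (qpoch a q n - L))%R).
   - intros n. pose proof (im_le_Cmod (qpoch a q n - L)).
     rewrite Im_minus in H.
     apply Rabs_le_between in H. lra.
   - replace (Finite (Im L)) with (Finite (Im L - 0)) by (f_equal; ring).
     apply is_lim_seq_minus'. apply is_lim_seq_const. auto.
   - replace (Finite (Im L)) with (Finite (Im L + 0)) by (f_equal; ring).
     apply is_lim_seq_plus'. apply is_lim_seq_const. auto. }
 unfold qpinf. rewrite (is_lim_seq_unique _ _ HR), (is_lim_seq_unique _ _ HI). simpl.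
 destruct L; reflexivity. Qed.

Lemma exp_le_mono x y : (x <= y)%R -> (exp x <= exp y)%R.
Proof. intros h. destruct (Rle_lt_or_eq_dec _ _ h). left; apply exp_increasing; auto. subst; lra. Qed.

Lemma Cmod_1_minus (w : C) : (Cmod (1 - w) <= 1 + Cmod w)%R.
Proof. unfold Cminus. eapply Rle_trans. apply Cmod_triangle. rewrite Cmod_1, Cmod_opp. lra. Qed.

Lemma qpoch_bound a q m : (Cmod q < 1)%R ->
  (Cmod (qpoch a q m) <= exp (Cmod a * (1 - Cmod q ^ m) / (1 - Cmod q)))%R.
Proof. intros hq. pose proof (Cmod_ge_0 q). pose proof (Cmod_ge_0 a). induction m.
 - rewrite qpoch_O, Cmod_1. simpl. replace (Cmod a * (1 - 1) / (1 - Cmod q))%R with 0%R by (field; lra).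
   rewrite exp_0. lra.
 - rewrite qpoch_S, Cmod_mult.
   replace (Cmod a * (1 - Cmod q ^ S m) / (1 - Cmod q))%R with
     (Cmod a * (1 - Cmod q ^ m) / (1 - Cmod q) + Cmod a * Cmod q ^ m)%R by (simpl; field; lra).
   rewrite exp_plus. apply Rmult_le_compat; try apply Cmod_ge_0; auto.
   eapply Rle_trans. apply Cmod_1_minus. rewrite Cmod_mult, Cmod_pow_n.
   apply exp_ineq1_le. Qed.

Lemma qpoch_bound' a q m : (Cmod q < 1)%R ->
  (Cmod (qpoch a q m) <= exp (Cmod a / (1 - Cmod q)))%R.
Proof. intros hq. eapply Rle_trans. apply qpoch_bound; auto.
 pose proof (Cmod_ge_0 q). pose proof (Cmod_ge_0 a).
 assert (0 <= Cmod q ^ m)%R by (apply pow_le; auto).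
 apply exp_le_mono. unfold Rdiv. apply Rmult_le_compat_r. apply Rlt_le, Rinv_0_lt_compat. lra. nra.
Qed.

Lemma qpoch_telescope a q m :
  csum (fun k => qpoch a q (S k) - qpoch a q k) m = qpoch a q (S m) - 1.
Proof. induction m. rewrite sum0, qpoch_O. reflexivity. rewrite sumS, IHm. ring. Qed.

Lemma qpoch_conv a q : (Cmod q < 1)%R -> exists L, Clim (qpoch a q) L.
Proof. intros hq. set (M := exp (Cmod a / (1 - Cmod q))).
 set (d := fun k => qpoch a q (S k) - qpoch a q k).
 assert (hd : forall k, (norm (d k : C_CompleteNormedModule) <= M * Cmod a * Cmod q ^ k)%R).
 { intros k. change (norm (d k : C_CompleteNormedModule)) with (Cmod (d k)). unfold d.
   rewrite qpoch_S. replace (qpoch a q k * (1 - a * pow_n q k) - qpoch a q k) with (- (qpoch a q k * a * pow_n q k)) by ring.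
   rewrite Cmod_opp, !Cmod_mult, Cmod_pow_n. pose proof (Cmod_ge_0 a). pose proof (Cmod_ge_0 q).
   assert (0 <= Cmod q ^ k)%R by (apply pow_le; auto).
   apply Rmult_le_compat_r; auto. apply Rmult_le_compat_r; auto. apply qpoch_bound'; auto. }
 assert (hex : ex_series (d : nat -> C_CompleteNormedModule)).
 { apply ex_series_le with (1 := hd).
   apply (@ex_series_scal_l R_AbsRing R_NormedModule (M * Cmod a)%R (fun k => Cmod q ^ k)%R).
   apply ex_series_geom. rewrite Rabs_pos_eq; auto. apply Cmod_ge_0. }
 destruct hex as [l hl].
 exists (l + 1). apply Clim_incr.
 assert (hc : Clim (fun m => csum d m) l) by exact hl.
 apply Clim_to_Cmod in hc.
 apply Clim_Cmod with (e := fun m => Cmod (csum d m - l)); auto.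
 intros m. unfold d. rewrite qpoch_telescope. right. f_equal. ring.
Qed.

Lemma qpinf_spec a q : (Cmod q < 1)%R -> Clim (qpoch a q) (qpinf a q).
Proof. intros hq. destruct (qpoch_conv a q hq) as [L hL]. rewrite (Clim_qpinf _ _ _ hL). auto. Qed.

Lemma qpinf_front a q : (Cmod q < 1)%R -> qpinf a q = (1 - a) * qpinf (a * q) q.
Proof. intros hq. apply (Clim_unique (qpoch a q)). apply qpinf_spec; auto.
 apply Clim_incr. apply Clim_ext with (u := fun m => (1 - a) * qpoch (a*q) q m).
 intros; rewrite qpoch_front; auto. apply Clim_scal, qpinf_spec; auto. Qed.

Lemma qpinf_zero q : qpinf 0 q = 1.
Proof. apply Clim_qpinf. apply Clim_ext with (u := fun _ => 1). 2: apply Clim_const.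
 intros n. induction n. auto. rewrite qpoch_S, <- IHn. ring. Qed.

Lemma Cmod_rev (a b : C) : (Rabs (Cmod a - Cmod b) <= Cmod (a - b))%R.
Proof. apply Rabs_le. split.
 - pose proof (Cmod_triangle (b - a) a). replace (b - a + a) with b in H by ring.
   replace (Cmod (b - a)) with (Cmod (a - b)) in H. lra.
   replace (b - a) with (- (a - b)) by ring. symmetry. apply Cmod_opp.
 - pose proof (Cmod_triangle (a - b) b). replace (a - b + b) with a in H by ring. lra. Qed.

Lemma lim_Cmod_1 q : (Cmod q < 1)%R -> is_lim_seq (fun n => Cmod (1 - q * pow_n q n)) 1%R.
Proof. intros hq.
 assert (hg : is_lim_seq (fun n => Cmod q * Cmod q ^ n)%R 0%R).
 { replace 0%R with (Cmod q * 0)%R by ring. apply (is_lim_seq_scal_l _ (Cmod q) 0%R).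
   apply is_lim_seq_geom. rewrite Rabs_pos_eq; auto. apply Cmod_ge_0. }
 apply is_lim_seq_le_le with (u := fun n => (1 - Cmod q * Cmod q ^ n)%R) (w := fun n => (1 + Cmod q * Cmod q ^ n)%R).
 - intros n. pose proof (Cmod_rev 1 (q * pow_n q n)). rewrite Cmod_1, Cmod_mult, Cmod_pow_n in H.
   pose proof (Cmod_1_minus (q * pow_n q n)). rewrite Cmod_mult, Cmod_pow_n in H0.
   pose proof (Rle_abs (1 - Cmod q * Cmod q ^ n)%R). split; lra.
 - replace (Finite 1) with (Finite (1 - 0)) by (f_equal; ring). apply is_lim_seq_minus'. apply is_lim_seq_const. auto.
 - replace (Finite 1) with (Finite (1 + 0)) by (f_equal; ring). apply is_lim_seq_plus'. apply is_lim_seq_const. auto.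
Qed.

Lemma Cmod_qpochq_pos q k : (Cmod q < 1)%R -> (0 < Cmod (qpoch q q k))%R.
Proof. intros hq. apply Cmod_gt_0, qpochq_ne0; auto. Qed.

Lemma DA q rho : (Cmod q < 1)%R -> (0 < rho < 1)%R -> ex_series (fun k => rho ^ k / Cmod (qpoch q q k))%R.
Proof. intros hq hr.
 assert (hpos : forall k, (0 < rho ^ k / Cmod (qpoch q q k))%R).
 { intros k. apply Rdiv_lt_0_compat. apply pow_lt; lra. apply Cmod_qpochq_pos; auto. }
 apply ex_series_ext with (a := fun k => Rabs (rho ^ k / Cmod (qpoch q q k))%R).
 { intros k. apply Rabs_pos_eq. apply Rlt_le, hpos. }
 apply ex_series_DAlembert with (k := rho). lra. intros n. apply Rgt_not_eq, hpos.
 apply is_lim_seq_ext with (u := fun n => (rho * / Cmod (1 - q * pow_n q n))%R).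
 { intros n. rewrite qpoch_S, Cmod_mult. pose proof (Cmod_qpochq_pos q n hq).
   assert (0 < Cmod (1 - q * pow_n q n))%R.
   { apply Cmod_gt_0, one_minus_ne0. rewrite Cmod_mult, Cmod_pow_n. pose proof (Cmod_ge_0 q).
     assert (Cmod q ^ n <= 1)%R by (apply Rpow_le1; lra). nra. }
   assert (0 < rho ^ n)%R by (apply pow_lt; lra).
   set (A := Cmod (qpoch q q n)) in *. set (B := Cmod (1 - q * pow_n q n)) in *.
   rewrite Rabs_pos_eq. simpl pow. field. repeat split; lra.
   apply Rlt_le. apply Rdiv_lt_0_compat. apply Rdiv_lt_0_compat. apply pow_lt; lra. nra.
   apply Rdiv_lt_0_compat; lra. }
 replace (Finite rho) with (Rbar_mult rho (Rbar_inv 1%R)) by (simpl; f_equal; field).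
 apply is_lim_seq_scal_l. apply is_lim_seq_inv. apply lim_Cmod_1; auto. simpl. intro e; injection e; lra.
Qed.

Definition ea q z k : C := pow_n z k / qpoch q q k.

Lemma is_series_Clim (a : nat -> C) (l : C) : is_series a l -> Clim (fun n => csum a n) l.
Proof. intros h; exact h. Qed.
Lemma Clim_is_series (a : nat -> C) (l : C) : Clim (fun n => csum a n) l -> is_series a l.
Proof. intros h; exact h. Qed.
Lemma is_series_unique_C (a : nat -> C) (l1 l2 : C) : is_series a l1 -> is_series a l2 -> l1 = l2.
Proof. intros h1 h2. apply (Clim_unique (fun n => csum a n)); apply is_series_Clim; auto. Qed.
Lemma is_series_eq_l (a : nat -> C) (l l' : C) : l = l' -> is_series a l -> is_series a l'.
Proof. intros ->; auto. Qed.
Lemma is_series_ext_C (a b : nat -> C) (l : C) : (forall n, a n = b n) -> is_series a l -> is_series b l.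
Proof. intros e h. apply (is_series_ext a b l e h). Qed.
Lemma is_series_scal_C (a : nat -> C) (l c : C) : is_series a l -> is_series (fun n => c * a n) (c * l).
Proof. intros h. exact (is_series_scal c a l h). Qed.
Lemma is_series_minus_C (a b : nat -> C) (la lb : C) : is_series a la -> is_series b lb ->
  is_series (fun n => a n - b n) (la - lb).
Proof. intros h1 h2. exact (is_series_minus a b la lb h1 h2). Qed.
Lemma is_series_incr_1_C (a : nat -> C) (l : C) : is_series a l -> is_series (fun k => a (S k)) (l - a 0%nat).
Proof. intros h. apply is_series_incr_1. assert (E : l = (l - a 0%nat) + a 0%nat) by ring.
 rewrite E in h. exact h. Qed.

Lemma ea_bound q z rho k : (Cmod q < 1)%R -> (Cmod z <= rho)%R ->
  (Cmod (ea q z k) <= rho ^ k / Cmod (qpoch q q k))%R.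
Proof. intros hq hz. unfold ea. rewrite Cmod_div by (apply qpochq_ne0; auto). rewrite Cmod_pow_n.
 unfold Rdiv. apply Rmult_le_compat_r. apply Rlt_le, Rinv_0_lt_compat, Cmod_qpochq_pos; auto.
 apply pow_incr. split; auto. apply Cmod_ge_0. Qed.

Lemma ea_ex q z : (Cmod q < 1)%R -> (Cmod z < 1)%R -> ex_series (ea q z : nat -> C_CompleteNormedModule).
Proof. intros hq hz. pose proof (Cmod_ge_0 z).
 apply ex_series_le with (b := (fun k => ((1 + Cmod z)/2) ^ k / Cmod (qpoch q q k))%R).
 intros k. change (norm (ea q z k : C_CompleteNormedModule)) with (Cmod (ea q z k)). apply ea_bound; auto. lra.
 apply DA; auto. lra. Qed.

Lemma ea_exists q z : (Cmod q < 1)%R -> (Cmod z < 1)%R -> exists l, is_series (ea q z) l.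
Proof. intros hq hz. destruct (ea_ex q z hq hz) as [l hl]. exists l. exact hl. Qed.

Lemma ea_FE q z (l1 l2 : C) : (Cmod q < 1)%R -> (Cmod z < 1)%R -> is_series (ea q z) l1 -> is_series (ea q (z * q)) l2 ->
  l2 = (1 - z) * l1.
Proof. intros hq hz h1 h2. pose proof (is_series_minus_C _ _ _ _ h1 h2) as hm.
 apply is_series_incr_1_C in hm.
 assert (E0 : ea q z 0%nat - ea q (z * q) 0%nat = 0). { unfold ea. rewrite !pO, qpoch_O. field. }
 rewrite E0 in hm.
 assert (hs : is_series (fun k => z * ea q z k) (l1 - l2 - 0)).
 { apply (is_series_ext_C _ _ _ ) with (2 := hm). intros k. unfold ea.
   rewrite pow_n_mul, !pS, qpoch_S. pose proof (qpochq_ne0 q k hq).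
   assert (1 - q * pow_n q k <> 0) by (apply one_minus_ne0; rewrite <- pS; rewrite Cmod_pow_n; apply pow_lt_1_compat; [split; [apply Cmod_ge_0|auto]|lia]).
   field. auto. }
 pose proof (is_series_scal_C _ _ z h1) as h3.
 pose proof (is_series_unique_C _ _ _ hs h3). 
 replace l2 with (l1 - (l1 - l2 - 0)) by ring. rewrite H. ring. Qed.

Definition Hval q z : C := epsilon (inhabits (RtoC 0)) (fun l => is_series (ea q z) l).

Lemma Hval_spec q z : (Cmod q < 1)%R -> (Cmod z < 1)%R -> is_series (ea q z) (Hval q z).
Proof. intros hq hz. unfold Hval. apply epsilon_spec. apply ea_exists; auto. Qed.

Lemma Hval_iter q s m : (Cmod q < 1)%R -> (Cmod s < 1)%R -> Hval q (s * pow_n q m) = qpoch s q m * Hval q s.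
Proof. intros hq hs. induction m.
 - rewrite pO, qpoch_O. replace (s * 1) with s by ring. ring.
 - assert (hz : (Cmod (s * pow_n q m) < 1)%R) by (apply Cmod_mul_pow_lt; auto).
   assert (E : s * pow_n q (S m) = s * pow_n q m * q) by (rewrite pS; ring).
   rewrite E. rewrite (ea_FE q (s * pow_n q m) (Hval q (s * pow_n q m)) (Hval q (s * pow_n q m * q))); auto.
   rewrite IHm, qpoch_S. ring. apply Hval_spec; auto. apply Hval_spec; auto.
   rewrite <- E. apply Cmod_mul_pow_lt; auto. Qed.

Lemma csum_norm_le (c : nat -> C) (b : nat -> R) N : (forall k, (Cmod (c k) <= b k)%R) ->
  (Cmod (csum c N) <= sum_n b N)%R.
Proof. intros h. induction N.
 - rewrite sum0. rewrite sum_O. auto.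
 - rewrite sumS, sum_Sn. eapply Rle_trans. apply Cmod_triangle. change (plus (sum_n b N) (b (S N))) with (sum_n b N + b (S N))%R.
   specialize (h (S N)). lra. Qed.

Lemma series_norm_le (c : nat -> C) (l : C) (b : nat -> R) (B : R) :
  is_series c l -> (forall k, (Cmod (c k) <= b k)%R) -> is_series b B -> (Cmod l <= B)%R.
Proof. intros hc hb hB.
 assert (hb0 : forall k, (0 <= b k)%R) by (intros k; eapply Rle_trans; [apply Cmod_ge_0|apply hb]).
 assert (hBl : is_lim_seq (sum_n b) B) by exact hB.
 assert (hle : forall N, (sum_n b N <= B)%R).
 { apply is_lim_seq_incr_compare; auto. intros n. rewrite sum_Sn.
   change (plus (sum_n b n) (b (S n))) with (sum_n b n + b (S n))%R. specialize (hb0 (S n)). lra. }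
 apply is_series_Clim, Clim_to_Cmod in hc.
 assert (hn : is_lim_seq (fun N => Cmod (csum c N)) (Cmod l)).
 { apply is_lim_seq_le_le with (u := fun N => (Cmod l - Cmod (csum c N - l))%R) (w := fun N => (Cmod l + Cmod (csum c N - l))%R).
   - intros N. pose proof (Cmod_rev (csum c N) l). apply Rabs_le_between in H. lra.
   - replace (Finite (Cmod l)) with (Finite (Cmod l - 0)) by (f_equal; ring).
     apply is_lim_seq_minus'. apply is_lim_seq_const. auto.
   - replace (Finite (Cmod l)) with (Finite (Cmod l + 0)) by (f_equal; ring).
     apply is_lim_seq_plus'. apply is_lim_seq_const. auto. }
 pose proof (is_lim_seq_le (fun N => Cmod (csum c N)) (fun _ => B) (Cmod l) B) as HH.
 simpl in HH. apply HH; auto. intros N. eapply Rle_trans. apply csum_norm_le; eauto. apply hle.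
 apply is_lim_seq_const. Qed.

Lemma Hval_near1 q s : (Cmod q < 1)%R -> (Cmod s < 1)%R ->
  exists B, forall z, (Cmod z <= Cmod s)%R -> (Cmod (Hval q z - 1) <= Cmod z * B)%R.
Proof. intros hq hs. pose proof (Cmod_ge_0 s). set (rho := ((1 + Cmod s) / 2)%R).
 assert (hr : (0 < rho < 1)%R) by (unfold rho; lra).
 set (b := fun k => (rho ^ k / Cmod (qpoch q q (S k)))%R).
 assert (hb : ex_series b).
 { pose proof (DA q rho hq hr) as hd. apply ex_series_incr_1 in hd.
   apply (@ex_series_scal_l R_AbsRing R_NormedModule (/ rho)%R) in hd.
   apply ex_series_ext with (2 := hd). intros k. unfold b.
   assert (E : (/ rho * (rho ^ S k / Cmod (qpoch q q (S k))) = rho ^ k / Cmod (qpoch q q (S k)))%R).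
   { simpl pow. field. split. apply Rgt_not_eq, Cmod_qpochq_pos; auto. lra. }
   exact E. }
 exists (Series b). intros z hz.
 assert (hz1 : (Cmod z < 1)%R) by lra.
 pose proof (Hval_spec q z hq hz1) as hH. apply is_series_incr_1_C in hH.
 assert (E0 : ea q z 0%nat = 1) by (unfold ea; rewrite pO, qpoch_O; field).
 rewrite E0 in hH.
 set (c := fun k => pow_n z k / qpoch q q (S k)).
 assert (hcb : forall k, (Cmod (c k) <= b k)%R).
 { intros k. unfold c, b. rewrite Cmod_div by (apply qpochq_ne0; auto). rewrite Cmod_pow_n.
   unfold Rdiv. apply Rmult_le_compat_r. apply Rlt_le, Rinv_0_lt_compat, Cmod_qpochq_pos; auto.
   apply pow_incr. split. apply Cmod_ge_0. unfold rho; lra. }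
 assert (hce : ex_series (c : nat -> C_CompleteNormedModule)).
 { apply ex_series_le with (b := b); auto. }
 destruct hce as [l' hl']. assert (hl : is_series c l') by exact hl'.
 pose proof (is_series_scal_C _ _ z hl) as h2.
 assert (h3 : is_series (fun k => z * c k) (Hval q z - 1)).
 { apply (is_series_ext_C _ _ _) with (2 := hH). intros k. unfold ea, c. rewrite pS. unfold Cdiv. ring. }
 rewrite (is_series_unique_C _ _ _ h3 h2). rewrite Cmod_mult.
 apply Rmult_le_compat_l. apply Cmod_ge_0.
 apply (series_norm_le c l' b); auto. apply Series_correct; auto. Qed.

Lemma euler_prod q s : (Cmod q < 1)%R -> (Cmod s < 1)%R -> qpinf s q * Hval q s = 1.
Proof. intros hq hs. destruct (Hval_near1 q s hq hs) as [B hB].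
 apply (Clim_unique (fun m => Hval q (s * pow_n q m))).
 - apply Clim_ext with (u := fun m => Hval q s * qpoch s q m).
   intros m. rewrite Hval_iter; auto. ring.
   replace (qpinf s q * Hval q s) with (Hval q s * qpinf s q) by ring. apply Clim_scal, qpinf_spec; auto.
 - apply Clim_Cmod with (e := fun m => (Cmod s * B * Cmod q ^ m)%R).
   + intros m. eapply Rle_trans. apply hB. rewrite Cmod_mult, Cmod_pow_n.
     pose proof (Cmod_ge_0 s). assert (Cmod q ^ m <= 1)%R by (apply Rpow_le1; pose proof (Cmod_ge_0 q); lra). nra.
     rewrite Cmod_mult, Cmod_pow_n. right; ring.
   + replace 0%R with (Cmod s * B * 0)%R by ring. apply (is_lim_seq_scal_l _ (Cmod s * B)%R 0%R).
     apply is_lim_seq_geom. rewrite Rabs_pos_eq; auto. apply Cmod_ge_0. Qed.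

Lemma qpinf_ne0 q s : (Cmod q < 1)%R -> (Cmod s < 1)%R -> qpinf s q <> 0.
Proof. intros hq hs e. pose proof (euler_prod q s hq hs). rewrite e in H.
 replace (0 * Hval q s) with (RtoC 0) in H by ring. injection H. lra. Qed.

Lemma euler q s : (Cmod q < 1)%R -> (Cmod s < 1)%R ->
  is_series (fun k => pow_n s k / qpoch q q k) (/ qpinf s q).
Proof. intros hq hs. pose proof (Hval_spec q s hq hs). pose proof (euler_prod q s hq hs).
 pose proof (qpinf_ne0 q s hq hs).
 replace (/ qpinf s q) with (Hval q s). exact H.
 transitivity (/ qpinf s q * (qpinf s q * Hval q s)). field. auto. rewrite H0. ring. Qed.

Definition Lat (q x y u v : C) := exists a b : nat, u = pow_n q a * x /\ v = / pow_n q b * y.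

Lemma Dxy_pow_S (q : C) k f (u v : C) : Dxy_pow q (S k) f u v =
  (Dxy_pow q k f u (/ q * v) - Dxy_pow q k f (q * u) v) / (u - / q * v).
Proof. reflexivity. Qed.
Lemma Dxy_pow_O (q : C) f (u v : C) : Dxy_pow q 0 f u v = f u v.
Proof. reflexivity. Qed.

Lemma Lat_v (q x y u v : C) : q <> 0 -> Lat q x y u v -> Lat q x y u (/ q * v).
Proof. intros hq [a [b [-> ->]]]. exists a, (S b). split; auto. rewrite pS.
 pose proof (pow_n_ne0 q b hq). field. auto. Qed.
Lemma Lat_u (q x y u v : C) : Lat q x y u v -> Lat q x y (q * u) v.
Proof. intros [a [b [-> ->]]]. exists (S a), b. split; auto. rewrite pS. ring. Qed.
Lemma Lat_xy (q x y : C) : Lat q x y x y.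
Proof. exists 0%nat, 0%nat. rewrite !pO. split. ring. field. Qed.

Lemma Dloc (q x y : C) (f g : C -> C -> C) : q <> 0 -> (forall u v, Lat q x y u v -> f u v = g u v) ->
  forall k u v, Lat q x y u v -> Dxy_pow q k f u v = Dxy_pow q k g u v.
Proof. intros hq h k. induction k; intros u v hl.
 - rewrite !Dxy_pow_O. auto.
 - rewrite !Dxy_pow_S. rewrite (IHk u (/ q * v)), (IHk (q * u) v); auto.
   apply Lat_u; auto. apply Lat_v; auto. Qed.

Lemma Dlin (q : C) (f g : C -> C -> C) (c : C) : forall k u v,
  Dxy_pow q k (fun u v => (f u v - g u v) / c) u v = (Dxy_pow q k f u v - Dxy_pow q k g u v) / c.
Proof. intros k. induction k; intros u v.
 - rewrite !Dxy_pow_O. auto.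
 - rewrite !Dxy_pow_S, !IHk. unfold Cdiv. ring. Qed.

Section Main.
Variables (q x y : C).
Hypothesis hq : (Cmod q < 1)%R.
Hypothesis hq0 : q <> 0.
Hypothesis hxy : forall m : nat, y <> pow_n q (S m) * x.

Lemma Lat_den (u v : C) : Lat q x y u v -> u - / q * v <> 0.
Proof. intros [a [b [-> ->]]] e. apply (hxy (a + b)).
 pose proof (pow_n_ne0 q b hq0).
 transitivity ((q * pow_n q b) * (/ q * (/ pow_n q b * y))). field. auto.
 assert (E : / q * (/ pow_n q b * y) = pow_n q a * x).
 { transitivity (pow_n q a * x - (pow_n q a * x - / q * (/ pow_n q b * y))). ring. rewrite e. ring. }
 rewrite E, pS, pow_n_add. ring. Qed.

Lemma Lat_ut (u v t : C) : (Cmod (x * t) < 1)%R -> Lat q x y u v -> (Cmod (u * t) < 1)%R.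
Proof. intros h [a [b [-> ->]]]. replace (pow_n q a * x * t) with ((x * t) * pow_n q a) by ring.
 apply Cmod_mul_pow_lt; auto. Qed.

Lemma Lat_utq (u v t : C) : (Cmod (x * t) < 1)%R -> Lat q x y u v -> (Cmod (u * t * q) < 1)%R.
Proof. intros h hl. pose proof (Lat_ut u v t h hl). rewrite Cmod_mult.
 pose proof (Cmod_ge_0 q). pose proof (Cmod_ge_0 (u * t)). nra. Qed.

Definition Ff (n : nat) (t : C) : C -> C -> C :=
  fun u v => qpinf (v * t) q / qpinf (u * t) q * (Pn q u v n / qpoch (v * t) q n).

Lemma F0_step (t u v : C) : (Cmod (x * t) < 1)%R -> Lat q x y u v ->
  (Ff 0 t u (/ q * v) - Ff 0 t (q * u) v) / (u - / q * v) = t * Ff 0 t u v.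
Proof. intros ht hl. unfold Ff. rewrite !Pn_O, !qpoch_O.
 pose proof (Lat_den u v hl). pose proof (Lat_ut u v t ht hl). pose proof (Lat_utq u v t ht hl).
 rewrite (qpinf_front (/ q * v * t) q hq). replace (/ q * v * t * q) with (v * t) by (field; auto).
 rewrite (qpinf_front (u * t) q hq). replace (q * u * t) with (u * t * q) by ring.
 pose proof (qpinf_ne0 q (u * t * q) hq H1). pose proof (one_minus_ne0 _ H0).
 assert (u * q - v <> 0) by (intro e; apply H; replace (u - / q * v) with (/ q * (u * q - v)) by (field; auto); rewrite e; ring).
 field. repeat split; auto. Qed.

Lemma F0_eigen (t : C) : (Cmod (x * t) < 1)%R -> forall k u v, Lat q x y u v ->
  Dxy_pow q k (Ff 0 t) u v = pow_n t k * Ff 0 t u v.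
Proof. intros ht k. induction k; intros u v hl.
 - rewrite Dxy_pow_O, pO. ring.
 - rewrite Dxy_pow_S, IHk, IHk. 2: apply Lat_u; auto. 2: apply Lat_v; auto.
   transitivity (pow_n t k * ((Ff 0 t u (/ q * v) - Ff 0 t (q * u) v) / (u - / q * v))). unfold Cdiv. ring.
   rewrite F0_step; auto. rewrite pS. ring. Qed.


Definition Rf (n : nat) (t : C) : C :=
  qpinf (y * t) q / (qpinf t q * qpinf (x * t) q) * Sfun q x y t n.

Lemma F_rec n (t u v : C) : t <> 0 -> (Cmod (x * t) < 1)%R ->
  (forall j, qpoch (/ pow_n q j * y * t) q (S n) <> 0) -> Lat q x y u v ->
  Ff (S n) t u v = (Ff n t u v - Ff n (t * q) u v) / t.
Proof. intros ht0 hxt hyt hl. pose proof hl as [a [b [hu hv]]].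
 assert (hP : qpoch (v * t) q (S n) <> 0) by (rewrite hv; apply hyt).
 destruct (qpoch_Sn_ne0_k (v * t) q n n hP (le_n n)) as [hp hp1].
 assert (h1vt : 1 - v * t <> 0) by (intro e; apply hP; rewrite qpoch_front, e; ring).
 pose proof (Lat_ut u v t hxt hl). pose proof (Lat_utq u v t hxt hl).
 pose proof (qpinf_ne0 q (u * t * q) hq H0). pose proof (one_minus_ne0 _ H).
 unfold Ff.
 replace (v * (t * q)) with (v * t * q) by ring. replace (u * (t * q)) with (u * t * q) by ring.
 rewrite (qpinf_front (v * t) q hq), (qpinf_front (u * t) q hq).
 pose proof (qpoch_shift_rel (v * t) q n) as RV.
 assert (EV : qpoch (v * t * q) q n = qpoch (v * t) q n * (1 - v * t * pow_n q n) / (1 - v * t)).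
 { rewrite <- RV. field. auto. }
 rewrite EV, qpoch_S, Pn_S.
 field. repeat split; auto. Qed.

Lemma step n (t : C) : t <> 0 -> (Cmod t < 1)%R -> (Cmod (x * t) < 1)%R ->
  (forall j, qpoch (/ pow_n q j * y * t) q (S n) <> 0) ->
  is_series (fun k => Dxy_pow q k (Ff n t) x y / qpoch q q k) (Rf n t) ->
  is_series (fun k => Dxy_pow q k (Ff n (t * q)) x y / qpoch q q k) (Rf n (t * q)) ->
  is_series (fun k => Dxy_pow q k (Ff (S n) t) x y / qpoch q q k) (Rf (S n) t).
Proof. intros ht0 ht hxt hyt h1 h2.
 pose proof (is_series_minus_C _ _ _ _ h1 h2) as hm. apply (is_series_scal_C _ _ (/ t)) in hm.
 apply is_series_eq_l with (l := / t * (Rf n t - Rf n (t * q))).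
 2:{ apply (is_series_ext_C _ _ _) with (2 := hm). intros k.
     rewrite (Dloc q x y (Ff (S n) t) (fun u v => (Ff n t u v - Ff n (t * q) u v) / t) hq0).
     2:{ intros u v hl. apply F_rec; auto. }
     2: apply Lat_xy.
     rewrite Dlin. unfold Cdiv. ring. }
 assert (hy : qpoch (y * t) q (S n) <> 0).
 { specialize (hyt 0%nat). rewrite pO in hyt. replace (/ 1 * y * t) with (y * t) in hyt by field. auto. }
 assert (h1yt : 1 - y * t <> 0).
 { destruct (qpoch_Sn_ne0_k (y * t) q n 0 hy) as [_ H]; [lia|]. rewrite pO in H. intro e; apply H; rewrite <- e; ring. }
 assert (h1xt : 1 - x * t <> 0) by (apply one_minus_ne0; auto).
 assert (h1t : 1 - t <> 0) by (apply one_minus_ne0; auto).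
 assert (htq : (Cmod (t * q) < 1)%R) by (rewrite Cmod_mult; pose proof (Cmod_ge_0 t); pose proof (Cmod_ge_0 q); nra).
 assert (hxtq : (Cmod (x * t * q) < 1)%R) by (rewrite Cmod_mult; pose proof (Cmod_ge_0 (x * t)); pose proof (Cmod_ge_0 q); nra).
 pose proof (qpinf_ne0 q _ hq htq). pose proof (qpinf_ne0 q _ hq hxtq).
 pose proof (e_identity q x y t n hq h1xt hy) as He.
 unfold Rf.
 replace (y * (t * q)) with (y * t * q) by ring. replace (x * (t * q)) with (x * t * q) by ring.
 rewrite (qpinf_front (y * t) q hq), (qpinf_front t q hq), (qpinf_front (x * t) q hq).
 assert (E : Sfun q x y (t * q) n = (Sfun q x y t n - t * Sfun q x y t (S n)) * (1 - y * t) / ((1 - t) * (1 - x * t))).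
 { rewrite He. field. repeat split; auto. }
 rewrite E. field. repeat split; auto. Qed.

Lemma base (t : C) : (Cmod t < 1)%R -> (Cmod (x * t) < 1)%R ->
  is_series (fun k => Dxy_pow q k (Ff 0 t) x y / qpoch q q k) (Rf 0 t).
Proof. intros ht hxt. pose proof (euler q t hq ht) as hE.
 apply (is_series_scal_C _ _ (Ff 0 t x y)) in hE.
 apply is_series_eq_l with (l := Ff 0 t x y * / qpinf t q).
 2:{ apply (is_series_ext_C _ _ _) with (2 := hE). intros k.
     rewrite (F0_eigen t hxt k x y (Lat_xy q x y)). unfold Cdiv. ring. }
 pose proof (qpinf_ne0 q t hq ht). pose proof (qpinf_ne0 q (x * t) hq hxt).
 unfold Ff, Rf, Sfun. rewrite sum0, Pn_O, !qpoch_O, qbinom_0 by auto. simpl (0 - 0)%nat. rewrite pO.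
 field. repeat split; auto. Qed.

Lemma main_nz n : forall t : C, t <> 0 -> (Cmod t < 1)%R -> (Cmod (x * t) < 1)%R ->
  (forall j, qpoch (/ pow_n q j * y * t) q n <> 0) ->
  is_series (fun k => Dxy_pow q k (Ff n t) x y / qpoch q q k) (Rf n t).
Proof. induction n; intros t ht0 ht hxt hyt.
 - apply base; auto.
 - apply step; auto.
   + apply IHn; auto. intros j. specialize (hyt j). rewrite qpoch_S in hyt. intro e; apply hyt; rewrite e; ring.
   + assert (htq : (Cmod (t * q) < 1)%R) by (rewrite Cmod_mult; pose proof (Cmod_ge_0 t); pose proof (Cmod_ge_0 q); nra).
     apply IHn; auto.
     * apply Cmult_neq_0; auto.
     * replace (x * (t * q)) with (x * t * q) by ring. rewrite Cmod_mult. pose proof (Cmod_ge_0 (x * t)); pose proof (Cmod_ge_0 q); nra.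
     * intros j. specialize (hyt j). rewrite qpoch_front in hyt.
       replace (/ pow_n q j * y * t * q) with (/ pow_n q j * y * (t * q)) in hyt by ring.
       intro e; apply hyt; rewrite e; ring.
Qed.


Lemma qpoch_zero n : qpoch 0 q n = 1.
Proof. induction n. auto. rewrite qpoch_S, IHn. ring. Qed.

Lemma Ff_zero n (u v : C) : Ff n 0 u v = Pn q u v n.
Proof. unfold Ff. rewrite !Cmult_0_r, qpinf_zero, qpoch_zero. field. Qed.

Fixpoint cP (n k : nat) : C := match k with 0 => 1 | S k' => cP n k' * (1 - pow_n q (n - k')) end.

Lemma cP_zero n k : (n < k)%nat -> cP n k = 0.
Proof. induction k; intros h. lia. simpl. destruct (Nat.eq_dec n k).
 - subst. rewrite Nat.sub_diag, pO. ring.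
 - rewrite IHk by lia. ring. Qed.

Lemma cP_val n k : (k <= n)%nat -> cP n k * qpoch q q (n - k) = qpoch q q n.
Proof. induction k; intros h. simpl. rewrite Nat.sub_0_r. ring.
 simpl. rewrite <- IHk by lia. replace (n - k)%nat with (S (n - S k)) by lia.
 rewrite qpoch_S, <- pS. replace (S (n - S k)) with (n - k)%nat by lia. ring. Qed.

Lemma P_step (m : nat) (u v : C) : Lat q x y u v ->
  (Pn q u (/ q * v) m - Pn q (q * u) v m) / (u - / q * v) = (1 - pow_n q m) * Pn q u v (m - 1)%nat.
Proof. intros hl. pose proof (Lat_den u v hl).
 assert (u * q - v <> 0) by (intro e; apply H; replace (u - / q * v) with (/ q * (u * q - v)) by (field; auto); rewrite e; ring).
 destruct m as [|m].
 - rewrite !Pn_O, pO. unfold Cdiv. ring.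
 - replace (S m - 1)%nat with m by lia.
   assert (E1 : Pn q u (/ q * v) (S m) = (u - / q * v) * Pn q u v m).
   { rewrite Pn_front. replace (q * (/ q * v)) with v by (field; auto). auto. }
   assert (E2 : Pn q (q * u) v (S m) = pow_n q (S m) * ((u - / q * v) * Pn q u v m)).
   { rewrite <- E1, <- Pn_hom. replace (q * (/ q * v)) with v by (field; auto). auto. }
   rewrite E1, E2. field. auto. Qed.

Lemma DP n : forall k (u v : C), Lat q x y u v ->
  Dxy_pow q k (fun u v => Pn q u v n) u v = cP n k * Pn q u v (n - k).
Proof. induction k; intros u v hl.
 - rewrite Dxy_pow_O. simpl. rewrite Nat.sub_0_r. ring.
 - rewrite Dxy_pow_S, IHk, IHk. 2: apply Lat_u; auto. 2: apply Lat_v; auto.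
   transitivity (cP n k * ((Pn q u (/ q * v) (n - k) - Pn q (q * u) v (n - k)) / (u - / q * v))).
   unfold Cdiv; ring. rewrite P_step by auto. simpl. replace (n - k - 1)%nat with (n - S k)%nat by lia. ring. Qed.

Lemma csum_stable (a : nat -> C) n : (forall k, (n < k)%nat -> a k = 0) -> forall N, csum a (N + n) = csum a n.
Proof. intros h N. induction N. auto. change (S N + n)%nat with (S (N + n)). rewrite sumS, IHN, h by lia. ring. Qed.

Lemma Clim_shift (u : nat -> C) L m : Clim (fun N => u (N + m)%nat) L -> Clim u L.
Proof. revert u. induction m; intros u h.
 - apply Clim_ext with (2 := h). intros; f_equal; lia.
 - apply Clim_incr. apply IHm. apply Clim_ext with (2 := h). intros; f_equal; lia. Qed.

Lemma is_series_finite (a : nat -> C) n : (forall k, (n < k)%nat -> a k = 0) -> is_series a (csum a n).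
Proof. intros h. apply Clim_is_series. apply Clim_shift with (m := n).
 apply Clim_ext with (u := fun _ => csum a n). intros N. rewrite csum_stable; auto. apply Clim_const. Qed.

Lemma main_zero n : is_series (fun k => Dxy_pow q k (Ff n 0) x y / qpoch q q k) (Rf n 0).
Proof.
 apply (is_series_ext_C (fun k => cP n k * Pn q x y (n - k) / qpoch q q k)).
 { intros k. rewrite (Dloc q x y (Ff n 0) (fun u v => Pn q u v n) hq0).
   rewrite DP; auto. apply Lat_xy. intros u v _. apply Ff_zero. apply Lat_xy. }
 apply is_series_eq_l with (l := csum (fun k => cP n k * Pn q x y (n - k) / qpoch q q k) n).
 2:{ apply is_series_finite. intros k hk. rewrite cP_zero by auto. unfold Cdiv. ring. }
 transitivity (Ufun q y n x).
 { unfold Ufun. apply sum_ext_le. intros k hk. unfold qbinom. rewrite <- (cP_val n k hk).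
   pose proof (qpochq_ne0 q k hq). pose proof (qpochq_ne0 q (n - k) hq). field. auto. }
 rewrite U_eq_V by auto. unfold Vfun, Rf, Sfun. rewrite !Cmult_0_r, !qpinf_zero.
 transitivity (1 / (1 * 1) * csum (fun k => qbinom q n k * qpoch y q k * pow_n x (n - k)) n).
 field. f_equal. apply sum_ext_le. intros k hk. rewrite !qpoch_zero. field. Qed.

End Main.

Theorem lemma2p3 (q t x y : C) (n : nat)
  (hq : (Cmod q < 1)%R) (hq0 : q <> 0)
  (ht : (Cmod t < 1)%R) (hxt : (Cmod (x * t) < 1)%R)
  (hxy : forall m : nat, y <> pow_n q (S m) * x)
  (hyt : forall j : nat, qpoch (/ pow_n q j * y * t) q n <> 0) :
  is_series
    (fun k : nat =>
       Dxy_pow q k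
         (fun u v : C => qpinf (v * t) q / qpinf (u * t) q * (Pn q u v n / qpoch (v * t) q n))
         x y / qpoch q q k)
    (qpinf (y * t) q / (qpinf t q * qpinf (x * t) q) *
     sum_n (fun k : nat =>
              qbinom q n k * (qpoch y q k * qpoch (x * t) q k) / qpoch (y * t) q k
              * pow_n x (n - k)) n).
Proof.
  destruct (classic (t = 0)) as [ht0 | ht0].
  - subst t. exact (main_zero q x y hq hq0 hxy n).
  - exact (main_nz q x y hq hq0 hxy n t ht0 ht hxt hyt).
Qed.
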